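(* Let $n\in\mathbb{Z}$ with $|n|\geq1$, $\alpha>0$, $\kappa<\alpha^{-1}$ and $\beta>0$. If $$R>\left(\frac{12\,(1+n^2(2\ln 2-1))}{\alpha^{-1}-\kappa}\right)^{1/2},$$ then there exists $u_0\in H$ such that $\|u_0\|_H^2>\beta$ and $\mathcal{I}_\kappa(u_0)<0$.
   Context: $H$ is the completion of $X=\{u\in C^1[0,R]: u(0)=0=u(R)\}$ with respect to the inner product $(u,\tilde u)=\int_0^R\left\{ru_r\tilde u_r+\frac1r u\tilde u\right\}dr$, and $\|\cdot\|_H$ is the induced norm. The functional $\mathcal{I}_\kappa:H\to\mathbb{R}$ is $$\mathcal{I}_\kappa(u)=\frac12\int_0^R\left\{ru_r^2+\frac{n^2}{r}u^2-2(\alpha^{-1}-\kappa)ru^2+2\alpha^{-2}r\ln(1+\alpha u^2)\right\}dr.$$ *)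

(* Defs.v *)
From Stdlib Require Export Reals.
From Coquelicot Require Export Coquelicot.
Open Scope R_scope.

(* A C^1 function on [0,Rad] is represented by a function R -> R that is
   differentiable at every point of [0,Rad] with derivative continuous there
   (every C^1[0,Rad] function admits such an extension). *)
Definition in_X (Rad : R) (u : R -> R) : Prop :=
  u 0 = 0 /\ u Rad = 0 /\
  forall r, 0 <= r <= Rad -> ex_derive u r /\ continuous (Derive u) r.

Definition H_norm_sq (Rad : R) (u : R -> R) : R :=
  RInt (fun r => r * (Derive u r) ^ 2 + / r * (u r) ^ 2) 0 Rad.

Definition I_kappa (n : Z) (alpha kappa Rad : R) (u : R -> R) : R :=
  / 2 * RInt (fun r => r * (Derive u r) ^ 2 + (IZR n) ^ 2 / r * (u r) ^ 2
                        - 2 * (/ alpha - kappa) * r * (u r) ^ 2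
                        + 2 * / (alpha ^ 2) * r * ln (1 + alpha * (u r) ^ 2)) 0 Rad.

(* Main.v *)
Require Import Defs.
From Stdlib Require Import Reals Lra Psatz.
From Coquelicot Require Import Coquelicot.
Open Scope R_scope.

Lemma ln_le_sub1 y : 0 < y -> ln y <= y - 1.
Proof. intros Hy. pose proof (exp_ineq1_le (ln y)). rewrite exp_ln in H; lra. Qed.
Lemma ln_ge_1 y : 0 < y -> 1 - / y <= ln y.
Proof. intros Hy. pose proof (ln_le_sub1 (/ y) (Rinv_0_lt_compat _ Hy)).
 rewrite ln_Rinv in H; lra. Qed.
Lemma ln2_lb : 0.634 <= ln 2.
Proof.
 replace 2 with ((5/4)*(6/5)*(7/6)*(8/7)) by field.
 rewrite !ln_mult; try lra.
 pose proof (ln_ge_1 (5/4)). pose proof (ln_ge_1 (6/5)).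
 pose proof (ln_ge_1 (7/6)). pose proof (ln_ge_1 (8/7)).
 assert (/(5/4) = 4/5) by field. assert (/(6/5) = 5/6) by field.
 assert (/(7/6) = 6/7) by field. assert (/(8/7) = 7/8) by field. lra.
Qed.
Lemma ln_sq_bound x : 0 <= x -> ln (1 + x) <= 2 * sqrt (1 + x).
Proof. intros Hx. assert (H1: 0 < sqrt (1+x)) by (apply sqrt_lt_R0; lra).
 replace (1+x) with (sqrt (1+x) ^ 2) at 1.
 2:{ simpl. rewrite Rmult_1_r, sqrt_sqrt; lra. }
 rewrite ln_pow by lra. pose proof (ln_le_sub1 _ H1). simpl; lra. Qed.
Lemma ln_mono x y : 0 < x -> x <= y -> ln x <= ln y.
Proof. intros H1 H2. destruct (Rle_lt_or_eq_dec _ _ H2) as [h|h].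
 - left; apply ln_increasing; auto.
 - subst; lra. Qed.

Lemma RInt_anti (f F : R -> R) a b : (forall x, is_derive F x (f x)) -> (forall x, continuous f x) -> RInt f a b = F b - F a.
Proof. intros H1 H2. apply is_RInt_unique. apply (is_RInt_derive F f); auto. Qed.

Lemma exR (f : R -> R) a b : (forall z, continuous f z) -> ex_RInt f a b.
Proof. intros H. apply (ex_RInt_continuous (V:=R_CompleteNormedModule)). intros; apply H. Qed.

Section S.
Variables s Rad : R.
Let u := fun r => s * r * (Rad - r).
Lemma Du r : Derive u r = s * (Rad - 2 * r).
Proof. apply is_derive_unique. unfold u. auto_derive; auto. ring. Qed.
Lemma uX : in_X Rad u.
Proof. unfold in_X, u; repeat split; try ring.
 - auto_derive; auto.
 - apply (continuous_ext (fun r : R => s * (Rad - 2*r)) (Derive u)). intros; symmetry; apply Du.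
   apply (ex_derive_continuous (fun r : R => s * (Rad - 2*r))). auto_derive; auto.
Qed.
Lemma normv : 0 < Rad -> H_norm_sq Rad u = s^2 * Rad^4 / 4.
Proof. intros HR. unfold H_norm_sq.
 rewrite (RInt_ext _ (fun r => s^2 * (r*(Rad-2*r)^2 + r*(Rad-r)^2))).
 2:{ intros x Hx. rewrite Rmin_left, Rmax_right in Hx by lra. rewrite Du. unfold u. simpl. field. lra. }
 rewrite (RInt_anti _ (fun r => s^2*(Rad^2*r^2/2 - 4*Rad*r^3/3 + r^4 + Rad^2*r^2/2 - 2*Rad*r^3/3 + r^4/4))).
 - simpl; field.
 - intros; auto_derive; auto. simpl; field.
 - intros; apply (ex_derive_continuous (fun r => s ^ 2 * (r * (Rad - 2 * r) ^ 2 + r * (Rad - r) ^ 2))); auto_derive; auto.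
Qed.

Lemma Ibound (N al c : R) : 0 < Rad -> 0 < al ->
  let Lg := ln (1 + al * (s * Rad^2/4)^2) in
  RInt (fun r => r * (Derive u r) ^ 2 + N ^ 2 / r * (u r) ^ 2
                        - 2 * c * r * (u r) ^ 2
                        + 2 * / (al ^ 2) * r * ln (1 + al * (u r) ^ 2)) 0 Rad
  <= s^2 * Rad^4/6 + N^2 * s^2 * Rad^4/12 - 2*c*s^2*Rad^6/60 + Lg * Rad^2 / al^2.
Proof. intros HR Hal Lg.
 rewrite (RInt_ext _ (fun x => x * (s*(Rad-2*x))^2 + N^2 * s^2 * x * (Rad-x)^2 - 2*c*x*(s*x*(Rad-x))^2 + 2*/(al^2)*x*ln(1+al*(s*x*(Rad-x))^2))).
 2:{ intros x Hx. rewrite Rmin_left, Rmax_right in Hx by lra. rewrite Du. unfold u. simpl; field. lra. }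
 eapply Rle_trans.
 apply (RInt_le _ (fun x => x * (s*(Rad-2*x))^2 + N^2 * s^2 * x * (Rad-x)^2 - 2*c*x*(s*x*(Rad-x))^2 + 2*/(al^2)*x*Lg)).
 - lra.
 - apply exR. intros z.
   apply (ex_derive_continuous (fun x => x * (s*(Rad-2*x))^2 + N^2 * s^2 * x * (Rad-x)^2 - 2*c*x*(s*x*(Rad-x))^2 + 2*/(al^2)*x*ln(1+al*(s*x*(Rad-x))^2))).
   auto_derive. apply Rplus_lt_le_0_compat. lra. apply Rmult_le_pos. lra. rewrite Rmult_1_r. apply Rle_0_sqr.
 - apply exR. intros z.
   apply (ex_derive_continuous (fun x => x * (s*(Rad-2*x))^2 + N^2 * s^2 * x * (Rad-x)^2 - 2*c*x*(s*x*(Rad-x))^2 + 2*/(al^2)*x*Lg)).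
   auto_derive. auto.
 - intros x Hx.
   assert (Hq : 0 <= 2 * / (al^2) * x).
   { assert (0 < / al^2) by (apply Rinv_0_lt_compat; nra). nra. }
   assert (Hl : ln (1 + al * (s * x * (Rad - x)) ^ 2) <= Lg).
   { unfold Lg. apply ln_mono. apply Rplus_lt_le_0_compat; [lra| apply Rmult_le_pos; [lra| apply pow2_ge_0]].
     assert (0 <= x * (Rad - x)) by (apply Rmult_le_pos; lra).
     assert (0 <= (x - Rad/2)^2) by apply pow2_ge_0.
     assert (x * (Rad - x) <= Rad^2/4) by lra.
     assert ((s * x * (Rad - x)) ^ 2 <= (s * Rad ^ 2 / 4) ^ 2).
     { replace ((s * x * (Rad - x)) ^ 2) with (s^2 * (x*(Rad-x))^2) by ring.
       replace ((s * Rad ^ 2 / 4) ^ 2) with (s^2 * (Rad^2/4)^2) by field.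
       apply Rmult_le_compat_l. apply pow2_ge_0. apply pow_incr. lra. }
     apply Rplus_le_compat_l. apply Rmult_le_compat_l; lra. }
   apply Rplus_le_compat_l. apply Rmult_le_compat_l; auto.
 - rewrite (RInt_anti _ (fun r => s^2*(Rad^2*r^2/2 - 4*Rad*r^3/3 + r^4) + N^2*s^2*(Rad^2*r^2/2 - 2*Rad*r^3/3 + r^4/4) - 2*c*s^2*(Rad^2*r^4/4 - 2*Rad*r^5/5 + r^6/6) + 2*/(al^2)*Lg*r^2/2)).
   + right. simpl; field. lra.
   + intros; auto_derive; auto. simpl; field. lra.
   + intros z. apply (ex_derive_continuous (fun x => x * (s*(Rad-2*x))^2 + N^2 * s^2 * x * (Rad-x)^2 - 2*c*x*(s*x*(Rad-x))^2 + 2*/(al^2)*x*Lg)).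
     auto_derive. auto.
Qed.
End S.

Theorem lemma2p2 (n : Z) (alpha kappa beta Rad : R) :
  1 <= Rabs (IZR n) -> 0 < alpha -> kappa < / alpha -> 0 < beta ->
  Rad > sqrt (12 * (1 + (IZR n) ^ 2 * (2 * ln 2 - 1)) / (/ alpha - kappa)) ->
  exists u0 : R -> R, in_X Rad u0 /\ H_norm_sq Rad u0 > beta /\
    I_kappa n alpha kappa Rad u0 < 0.
Proof.
 intros Hn Ha Hk Hb HR.
 set (N := IZR n) in *. set (c := / alpha - kappa) in *.
 pose proof ln2_lb as HL.
 assert (HN : 1 <= N^2).
 { rewrite <- pow2_abs. pose proof (Rabs_pos N). simpl. rewrite Rmult_1_r.
   replace 1 with (1*1) by ring. apply Rmult_le_compat; lra. }
 assert (Hc : 0 < c) by (unfold c; lra).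
 set (K := 12 * (1 + N ^ 2 * (2 * ln 2 - 1))) in *.
 assert (HK : 0 < K).
 { unfold K. assert (0 <= N^2 * (2 * ln 2 - 1)) by (apply Rmult_le_pos; lra). lra. }
 assert (HX : 0 < K / c) by (apply Rdiv_lt_0_compat; auto).
 pose proof (sqrt_lt_R0 _ HX) as Hs0.
 assert (HRp : 0 < Rad) by lra.
 assert (HR2 : K / c < Rad * Rad).
 { rewrite <- (sqrt_sqrt (K/c)) by lra. apply Rmult_le_0_lt_compat; lra. }
 assert (HcR : K < c * (Rad * Rad)).
 { replace K with (c * (K / c)) by (field; lra). apply Rmult_lt_compat_l; auto. }
 set (D := c * Rad^2 / 30 - (2 + N^2) / 12).
 assert (HD : 0 < D).
 { unfold D, K in *. assert (N^2 * (2 * ln 2 - 1) >= N^2 * 0.268).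
   { apply Rle_ge, Rmult_le_compat_l; lra. }
   simpl; lra. }
 set (Q := sqrt (1 + alpha * Rad^4 / 16)).
 assert (HQ : 0 < Q) by (apply sqrt_lt_R0; assert (0 < Rad^4) by (apply pow_lt; lra); nra).
 set (ia := / alpha ^ 2).
 assert (Hia : 0 < ia) by (apply Rinv_0_lt_compat; apply pow_lt; lra).
 assert (HR4 : 0 < Rad^4) by (apply pow_lt; lra).
 assert (HR2p : 0 < Rad^2) by (apply pow_lt; lra).
 set (k := 2 * Q * ia / (Rad^2 * D)).
 assert (Hk0 : 0 < k) by (unfold k; apply Rdiv_lt_0_compat; [nra| nra]).
 assert (Hkk : k * (Rad^2 * D) = 2 * Q * ia) by (unfold k; field; nra).
 assert (Hbb : 0 < 4 * beta / Rad^4) by (apply Rdiv_lt_0_compat; lra).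
 assert (Hbb2 : 4 * beta / Rad^4 * Rad^4 = 4 * beta) by (field; lra).
 set (t := 1 + k + 4 * beta / Rad^4).
 exists (fun r => t * r * (Rad - r)).
 split; [apply uX|split].
 - rewrite normv by lra.
   assert (Ht1' : 1 <= t) by (unfold t; lra).
   assert (t <= t^2) by (simpl; rewrite Rmult_1_r; pattern t at 1; rewrite <- Rmult_1_r; apply Rmult_le_compat_l; lra).
   assert (4 * beta / Rad^4 * Rad^4 < t * Rad^4) by (apply Rmult_lt_compat_r; unfold t; lra).
   nra.
 - unfold I_kappa. eapply Rle_lt_trans.
   { apply Rmult_le_compat_l. lra. apply (Ibound t Rad N alpha c); lra. }
   cbv zeta.
   set (Lg := ln (1 + alpha * (t * Rad ^ 2 / 4) ^ 2)).
   assert (Ht1 : 1 <= t) by (unfold t; lra).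
   assert (HLg : Lg <= 2 * t * Q).
   { unfold Lg. eapply Rle_trans. apply ln_sq_bound.
     apply Rmult_le_pos; [lra| apply pow2_ge_0].
     rewrite Rmult_assoc. apply Rmult_le_compat_l; [lra|].
     unfold Q. rewrite <- (sqrt_square t) at 2 by lra.
     rewrite <- sqrt_mult by (try nra; assert (0 < Rad^4) by (apply pow_lt; lra); nra).
     apply sqrt_le_1_alt.
     replace ((t * Rad ^ 2 / 4) ^ 2) with (t^2 * (Rad^4/16)) by (simpl; field).
     assert (1 <= t^2) by (simpl; nra).
     assert (0 <= alpha * Rad^4/16) by nra.
     simpl in *. nra. }
   assert (E : t ^ 2 * Rad ^ 4 / 6 + N ^ 2 * t ^ 2 * Rad ^ 4 / 12 - 2 * c * t ^ 2 * Rad ^ 6 / 60 +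
     Lg * Rad ^ 2 / alpha ^ 2 = - (t^2 * Rad^4 * D) + Lg * Rad^2 * ia).
   { unfold D, ia; simpl; field; lra. }
   rewrite E.
   assert (Hkt : k < t) by (unfold t; lra).
   assert (H1 : 2 * Q * ia < t * (Rad^2 * D)).
   { rewrite <- Hkk. apply Rmult_lt_compat_r; nra. }
   assert (H2 : Lg * Rad^2 * ia <= 2 * t * Q * Rad^2 * ia).
   { apply Rmult_le_compat_r; [lra|]. apply Rmult_le_compat_r; lra. }
   assert (H3 : t * Rad^2 * (2 * Q * ia) < t * Rad^2 * (t * (Rad^2 * D))).
   { apply Rmult_lt_compat_l; nra. }
   replace (t^2 * Rad^4 * D) with (t * Rad^2 * (t * (Rad^2 * D))) by (simpl; ring).
   assert (2 * t * Q * Rad^2 * ia = t * Rad^2 * (2 * Q * ia)) by ring.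
   lra.
Qed.
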